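(* Let $(A,B)$ be controllable. There is $\bar\beta\ge0$ depending only on $A,B,\mu_f,l_f,\mu_g,l_g,\bar\theta$ (in particular not on $N$) such that for every $Q\in\mathcal Q$, $R\in\mathcal R$ and $\theta$ with $\|\theta\|\le\bar\theta$, the vector $\beta^e=F(Q,R)\theta$ satisfies $\max(\bar\theta,\|\beta^e\|)\le\bar\beta$.
   Context: Fix $\mu_f,\mu_g>0$, $0<l_f,l_g<\infty$. $P^e(Q,R)$ denotes the positive definite solution of the DARE $P=Q+A^\top(P-PB(B^\top PB+R)^{-1}B^\top P)A$. $\mathcal Q=\{Q:\mu_fI_n\le Q\le l_fI_n\}$, $\mathcal R=\{R:\mu_gI_m\le R\le l_gI_m\}$. With $P^e=P^e(Q,R)$ and $K^e=(R+B^\top P^eB)^{-1}B^\top P^eA$, $F(Q,R)=(P^e)^{-1}(I-(A-BK^e)^\top)^{-1}Q$ (so that $\frac12(x-\beta^e)^\top P^e(x-\beta^e)$ is a bias function of the average-cost problem with stage cost $\frac12(x-\theta)^\top Q(x-\theta)+\frac12u^\top Ru$). *)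

(* Defs.v *)
(* real numbers modelled by an arbitrary real closed field. *)
From HB Require Import structures.
From mathcomp Require Import all_boot all_order all_algebra.
Set Implicit Arguments. Unset Strict Implicit. Unset Printing Implicit Defensive.
Import Order.TTheory GRing.Theory Num.Theory.
Local Open Scope ring_scope.

Definition vnorm (R : rcfType) (n : nat) (x : 'cV[R]_n) : R :=
  Num.sqrt ((x^T *m x) 0 0).

Definition loewner_le (R : rcfType) (n : nat) (M1 M2 : 'M[R]_n) : Prop :=
  M1^T = M1 /\ M2^T = M2 /\
  forall x : 'cV[R]_n, 0 <= (x^T *m (M2 - M1) *m x) 0 0.

Definition posdef (R : rcfType) (n : nat) (P : 'M[R]_n) : Prop :=
  P^T = P /\ forall x : 'cV[R]_n, x != 0 -> 0 < (x^T *m P *m x) 0 0.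

Definition controllable (R : rcfType) (n m : nat)
    (A : 'M[R]_n) (B : 'M[R]_(n, m)) : Prop :=
  \rank (\mxrow_(i < n) (A ^+ i *m B)) = n.

(* The sets \mathcal Q and \mathcal R *)
Definition Qset (R : rcfType) (n : nat) (muf lf : R) (Q : 'M[R]_n) : Prop :=
  loewner_le (muf%:M) Q /\ loewner_le Q (lf%:M).

Definition DARE (R : rcfType) (n m : nat) (A : 'M[R]_n) (B : 'M[R]_(n, m))
    (Q : 'M[R]_n) (Rc : 'M[R]_m) (P : 'M[R]_n) : Prop :=
  P = Q + A^T *m (P - P *m B *m invmx (B^T *m P *m B + Rc) *m B^T *m P) *m A.

Definition is_Pe (R : rcfType) (n m : nat) (A : 'M[R]_n) (B : 'M[R]_(n, m))
    (Q : 'M[R]_n) (Rc : 'M[R]_m) (P : 'M[R]_n) : Prop :=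
  posdef P /\ DARE A B Q Rc P.

Definition Kgain (R : rcfType) (n m : nat) (A : 'M[R]_n) (B : 'M[R]_(n, m))
    (Rc : 'M[R]_m) (P : 'M[R]_n) : 'M[R]_(m, n) :=
  invmx (Rc + B^T *m P *m B) *m B^T *m P *m A.

Definition Fmap (R : rcfType) (n m : nat) (A : 'M[R]_n) (B : 'M[R]_(n, m))
    (Q : 'M[R]_n) (Rc : 'M[R]_m) (P : 'M[R]_n) : 'M[R]_n :=
  invmx P *m invmx (1%:M - (A - B *m Kgain A B Rc P)^T) *m Q.

(* Main.v *)
Require Import Defs.
From HB Require Import structures.
From mathcomp Require Import all_boot all_order all_algebra.
Import Order.TTheory GRing.Theory Num.Theory.
Local Open Scope ring_scope.
From mathcomp Require Import ring lra.

Lemma inj_unit (R : fieldType) (n : nat) (M : 'M[R]_n) :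
  (forall v : 'cV[R]_n, M *m v = 0 -> v = 0) -> M \in unitmx.
Proof.
move=> H; rewrite unitmxE unitfE -det_tr; apply/negP => /det0P [v vn0 vM].
have : v^T = 0 by apply: H; rewrite -[M]trmxK -trmx_mul vM trmx0.
by move/(congr1 trmx); rewrite trmxK trmx0 => E; rewrite E eqxx in vn0.
Qed.

Lemma sq_pos (R : rcfType) (n : nat) (v : 'cV[R]_n) : 0 <= (v^T *m v) 0 0.
Proof. rewrite mxE; apply: sumr_ge0 => i _; rewrite mxE -expr2; exact: sqr_ge0. Qed.

Lemma sq_gt0 (R : rcfType) (n : nat) (v : 'cV[R]_n) : v != 0 -> 0 < (v^T *m v) 0 0.
Proof.
move=> vn0; rewrite lt_def sq_pos andbT; apply/negP => /eqP E.
move: vn0; rewrite mxE in E; apply/negP; rewrite negbK; apply/eqP/matrixP => i j.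
rewrite (ord1 j) mxE.
have hge : forall k, predT k -> 0 <= v^T 0 k * v k 0.
  by move=> k _; rewrite mxE -expr2; exact: sqr_ge0.
have H := psumr_eq0P hge E isT (i:=i).
have : v i 0 * v i 0 == 0 by rewrite mxE in H; rewrite H.
rewrite mulf_eq0 orbb => /eqP -> //.
Qed.
Arguments sq_gt0 {R n v}.
Arguments sq_pos {R n}.

Lemma mxE_sub (R : zmodType) m n (X Y : 'M[R]_(m, n)) i j :
  (X - Y) i j = X i j - Y i j.
Proof. by rewrite !mxE. Qed.

Lemma lyap_alg (R : comUnitRingType) n m (A : 'M[R]_n) (B : 'M[R]_(n,m))
  (P : 'M[R]_n) (Rc Si : 'M[R]_m) :
  P^T = P -> Si^T = Si -> Si *m (Rc + B^T *m P *m B) *m Si = Si ->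
  (A - B *m (Si *m B^T *m P *m A))^T *m P *m (A - B *m (Si *m B^T *m P *m A))
  + (Si *m B^T *m P *m A)^T *m Rc *m (Si *m B^T *m P *m A)
  = A^T *m (P - P *m B *m Si *m B^T *m P) *m A.
Proof.
move=> PT SiT HS.
set X := B^T *m P *m A.
set Y := A^T *m P *m B.
have KE : Si *m B^T *m P *m A = Si *m X by rewrite /X !mulmxA.
rewrite KE.
have XT : X^T = Y by rewrite /X /Y !trmx_mul trmxK PT mulmxA.
have KT : (Si *m X)^T = Y *m Si by rewrite trmx_mul XT SiT.
rewrite [(A - _)^T]linearB /= KT trmx_mul.
rewrite !(mulmxDl, mulmxDr, mulmxN, mulNmx).
have e1 : A^T *m P *m (B *m (Si *m X)) = Y *m Si *m X by rewrite /Y !mulmxA.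
have e2 : Y *m Si *m B^T *m P *m A = Y *m Si *m X by rewrite /X !mulmxA.
have e3 : Y *m Si *m B^T *m P *m (B *m (Si *m X)) + Y *m Si *m Rc *m (Si *m X)
   = Y *m Si *m X.
  by rewrite -{5}HS mulmxDr mulmxDl mulmxDr mulmxDl !mulmxA addrC.
have e4 : A^T *m (P *m B *m Si *m B^T *m P) *m A = Y *m Si *m X by rewrite /X /Y !mulmxA.
rewrite !KT e1 e2 e4 -e3.
move: (A^T *m P *m A) (Y *m Si *m B^T *m P *m (B *m (Si *m X))) (Y *m Si *m Rc *m (Si *m X)) => a w v.
rewrite opprK -addrA -[(- (w + v) + w) + v]addrA addNr addr0 //.
Qed.

Lemma qfD (R : comPzRingType) n (x y : 'cV[R]_n) (M1 M2 : 'M[R]_n) :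
  (x^T *m (M1 + M2) *m y) 0 0 = (x^T *m M1 *m y) 0 0 + (x^T *m M2 *m y) 0 0.
Proof. by rewrite mulmxDr mulmxDl mxE. Qed.

Lemma qfB (R : comPzRingType) n (x y : 'cV[R]_n) (M1 M2 : 'M[R]_n) :
  (x^T *m (M1 - M2) *m y) 0 0 = (x^T *m M1 *m y) 0 0 - (x^T *m M2 *m y) 0 0.
Proof. by rewrite mulmxBr mulmxBl !mxE. Qed.

Lemma qfS (R : comPzRingType) n (x y : 'cV[R]_n) (a : R) :
  (x^T *m a%:M *m y) 0 0 = a * (x^T *m y) 0 0.
Proof. by rewrite mul_mx_scalar -scalemxAl mxE. Qed.

Lemma qfT (R : comPzRingType) n p (x : 'cV[R]_n) (N : 'M[R]_(p, n)) (P : 'M[R]_p) :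
  (x^T *m (N^T *m P *m N) *m x) = ((N *m x)^T *m P *m (N *m x)).
Proof. by rewrite trmx_mul !mulmxA. Qed.

Lemma qf_sym (R : comPzRingType) n (x y : 'cV[R]_n) (P : 'M[R]_n) :
  P^T = P -> (x^T *m P *m y) 0 0 = (y^T *m P *m x) 0 0.
Proof.
move=> PT; rewrite -[in LHS](trmxK (x^T *m P *m y)) [in LHS]mxE.
by rewrite !trmx_mul trmxK PT mulmxA.
Qed.

Lemma qf_lin (R : comPzRingType) n (x y : 'cV[R]_n) (M : 'M[R]_n) (a b : R) :
  ((a *: x + b *: y)^T *m M *m (a *: x + b *: y)) 0 0 =
  a * a * (x^T *m M *m x) 0 0 + a * b * ((x^T *m M *m y) 0 0 + (y^T *m M *m x) 0 0)
  + b * b * (y^T *m M *m y) 0 0.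
Proof.
rewrite [(_ + _)^T]linearD /= !linearZ /= !(mulmxDl, mulmxDr) -!scalemxAl !linearZ /= !mxE.
ring.
Qed.

Theorem lemma8 (R : rcfType) (n m : nat) (A : 'M[R]_n) (B : 'M[R]_(n, m))
    (muf lf mug lg thetabar : R) :
  0 < muf -> 0 < lf -> 0 < mug -> 0 < lg ->
  controllable A B ->
  exists betabar : R, 0 <= betabar /\
    forall (Q : 'M[R]_n) (Rc : 'M[R]_m) (P : 'M[R]_n) (theta : 'cV[R]_n),
      Qset muf lf Q -> Qset mug lg Rc ->
      vnorm theta <= thetabar ->
      is_Pe A B Q Rc P ->
      Num.max thetabar (vnorm (Fmap A B Q Rc P *m theta)) <= betabar.
Proof.
move=> muf0 lf0 mug0 lg0 _.
exists (Num.max 0 (Num.max thetabar (2 * lf / muf * thetabar))).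
split; first by rewrite le_max lexx.
move=> Q Rc P theta [[_ [QT HQ1]] [_ [_ HQ2]]] [[_ [RT HR1]] _] Hth [[PT Ppos] Hdare].
have Qlo : forall x : 'cV[R]_n, muf * (x^T *m x) 0 0 <= (x^T *m Q *m x) 0 0.
  by move=> x; have := HQ1 x; rewrite qfB qfS subr_ge0.
have Qhi : forall x : 'cV[R]_n, (x^T *m Q *m x) 0 0 <= lf * (x^T *m x) 0 0.
  by move=> x; have := HQ2 x; rewrite qfB qfS subr_ge0.
have Rlo : forall x : 'cV[R]_m, mug * (x^T *m x) 0 0 <= (x^T *m Rc *m x) 0 0.
  by move=> x; have := HR1 x; rewrite qfB qfS subr_ge0.
have Rpsd : forall x : 'cV[R]_m, 0 <= (x^T *m Rc *m x) 0 0.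
  by move=> x; apply: le_trans (Rlo x); apply: mulr_ge0; [exact: ltW | exact: sq_pos].
have Ppsd : forall x : 'cV[R]_n, 0 <= (x^T *m P *m x) 0 0.
  move=> x; case: (eqVneq x 0) => [->|xn0]; last exact: ltW (Ppos x xn0).
  by rewrite mulmx0 mxE.
set S := Rc + B^T *m P *m B.
have ST : S^T = S by rewrite /S linearD /= !trmx_mul trmxK PT RT mulmxA.
have Sunit : S \in unitmx.
  apply: inj_unit => v Sv; case: (eqVneq v 0) => // vn0; exfalso.
  have h0 : (v^T *m S *m v) 0 0 = 0 by rewrite -mulmxA Sv mulmx0 mxE.
  move: h0; rewrite qfD qfT => h0.
  have := Ppsd (B *m v); have := Rlo v; have := sq_gt0 vn0.
  move=> h1 h2 h3.
  have : 0 < mug * (v^T *m v) 0 0 by rewrite mulr_gt0.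
  lra.
set Si := invmx S.
have SiT : Si^T = Si by rewrite /Si trmx_inv ST.
have HS : Si *m S *m Si = Si by rewrite /Si mulVmx // mul1mx.
have hL := @lyap_alg _ _ _ A B P Rc Si PT SiT HS.
move: Hdare; rewrite /DARE [B^T *m P *m B + Rc]addrC -/S -/Si -hL => Hly.
set K := Si *m B^T *m P *m A in Hly.
set M := A - B *m K in Hly.
have Lq : forall x : 'cV[R]_n, (x^T *m P *m x) 0 0 = (x^T *m Q *m x) 0 0
   + ((M *m x)^T *m P *m (M *m x)) 0 0 + ((K *m x)^T *m Rc *m (K *m x)) 0 0.
  by move=> x; rewrite {1}Hly !qfD !qfT addrA.
have Nunit : 1%:M - M^T \in unitmx.
  have -> : 1%:M - M^T = (1%:M - M)^T by rewrite [(1%:M - M)^T]linearB /= trmx1.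
  rewrite unitmx_tr; apply: inj_unit => v Mv; case: (eqVneq v 0) => // vn0; exfalso.
  have Mvv : M *m v = v.
    by apply/eqP; rewrite eq_sym -subr_eq0 -[X in X - _]mul1mx -mulmxBl Mv.
  have := Lq v; rewrite Mvv; have := Qlo v; have := Rpsd (K *m v); have := sq_gt0 vn0.
  move=> h1 h2 h3 h4.
  have : 0 < muf * (v^T *m v) 0 0 by rewrite mulr_gt0.
  lra.
have Punit : P \in unitmx.
  apply: inj_unit => v Pv; case: (eqVneq v 0) => // vn0; exfalso.
  have := Ppos v vn0; by rewrite -mulmxA Pv mulmx0 mxE ltxx.
rewrite /Fmap /Kgain -/S -/Si -/K -/M.
set z := invmx P *m invmx (1%:M - M^T) *m Q *m theta.
have hy : (1%:M - M^T) *m (P *m z) = Q *m theta.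
  by rewrite /z !mulmxA mulmxK // mulmxV // mul1mx.
rewrite mulmxBl mul1mx in hy.
clearbody z.
have hs : (z^T *m P *m z) 0 0 - ((M *m z)^T *m P *m z) 0 0 = (z^T *m Q *m theta) 0 0.
  have e := congr1 (fun X => (z^T *m X) 0 0) hy; simpl in e.
  rewrite mulmxBr mxE_sub in e.
  by rewrite -[z^T *m Q *m theta]mulmxA -e trmx_mul !mulmxA.
set u := M *m z. rewrite -/u in hs.
have hsym : (z^T *m P *m u) 0 0 = (u^T *m P *m z) 0 0 by apply: qf_sym.
have hb := Ppsd (1 *: u + (-1) *: z); rewrite qf_lin hsym in hb.
have hL1 := Lq z; rewrite -/u in hL1.
have h1 := Qlo z; have h2 := Rpsd (K *m z).
have Qpsd : forall x : 'cV[R]_n, 0 <= (x^T *m Q *m x) 0 0.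
  by move=> x; apply: le_trans (Qlo x); apply: mulr_ge0; [exact: ltW | exact: sq_pos].
have hc := Qpsd (muf *: z + (- (2 * lf)) *: theta).
rewrite qf_lin (@qf_sym _ _ theta z Q QT) in hc.
have h3 := Qhi z; have h4 := Qhi theta.
have ha := @sq_pos _ _ z; have ht := @sq_pos _ _ theta.
move: hs hb hL1 h1 h2 hc h3 h4 ha ht.
set A0 := (z^T *m P *m z) 0 0; set U := (u^T *m P *m u) 0 0.
set c := (u^T *m P *m z) 0 0; set s0 := (z^T *m Q *m theta) 0 0.
set q1 := (z^T *m Q *m z) 0 0; set r := ((K *m z)^T *m Rc *m (K *m z)) 0 0.
set q2 := (theta^T *m Q *m theta) 0 0; set a := (z^T *m z) 0 0.
set t := (theta^T *m theta) 0 0.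
move=> hs hb hL1 h1 h2 hc h3 h4 ha ht.
have e1 : muf * a <= 2 * s0 by lra.
have e2 : muf ^+ 2 * q1 <= muf ^+ 2 * (lf * a) by rewrite ler_wpM2l // sqr_ge0.
have e3 : 4 * lf ^+ 2 * q2 <= 4 * lf ^+ 2 * (lf * t).
  by rewrite ler_wpM2l // mulr_ge0 // sqr_ge0.
have e4 : 2 * muf * lf * (muf * a) <= 2 * muf * lf * (2 * s0).
  by rewrite ler_wpM2l // !mulr_ge0 // ltW.
have e5 : lf * (muf ^+ 2 * a) <= lf * (4 * lf ^+ 2 * t) by nra.
have e6 : muf ^+ 2 * a <= 4 * lf ^+ 2 * t by rewrite -(ler_pM2l lf0).
move: Hth; rewrite /vnorm -/a -/t => Hth.
have hx := sqrtr_ge0 a; have hy0 := sqrtr_ge0 t.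
have hxa := sqr_sqrtr ha; have hyt := sqr_sqrtr ht.
move: hx hy0 hxa hyt Hth; set x := Num.sqrt a; set y := Num.sqrt t => hx hy0 hxa hyt Hth.
have f1 : muf * x <= 2 * lf * y.
  case: (leP (muf * x) (2 * lf * y)) => // hlt; exfalso.
  have h2y : 0 <= 2 * lf * y by rewrite !mulr_ge0 // ltW.
  have hsum : 0 < muf * x + 2 * lf * y by lra.
  have hd : 0 < muf * x - 2 * lf * y by rewrite subr_gt0.
  have hp := mulr_gt0 hd hsum.
  have hp' : muf ^+ 2 * x ^+ 2 - 4 * lf ^+ 2 * y ^+ 2 > 0.
    by move: hp; congr (_ < _); ring.
  rewrite hxa hyt in hp'; lra.
have f2 : x * muf <= 2 * lf * thetabar by nra.
have f3 : x <= 2 * lf / muf * thetabar by rewrite mulrAC ler_pdivlMr.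
rewrite ge_max !le_max lexx f3 !orbT /=.
done.
Qed.
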